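(* Let $n\ge2$ and $0\le\epsilon<1/2$, and let $U_0,\dots,U_T$ be a quantum query algorithm with $T$ queries to the comparison oracle which, for every permutation $\sigma$ of $\{0,\dots,n-1\}$, outputs $\sigma$ with probability at least $1-\epsilon$ (via a fixed measurement of the final state). With $s_t$ defined as below, $s_T\le 2\sqrt{\epsilon(1-\epsilon)}\,s_0$.
   Context: For a permutation $\sigma$ of $\{0,\dots,n-1\}$, the comparison matrix $M_\sigma\in\{0,1\}^{n\times n}$ has $(M_\sigma)_{i,j}=1$ if $\sigma(i)\le\sigma(j)$ and $0$ otherwise. $H$ is the Hilbert space spanned by orthonormal vectors $|i,j,b,c\rangle$, $0\le i,j\le n-1$, $b\in\{0,1\}$, $c\in\{0,1\}^w$ for some fixed $w\ge0$, and $O_\sigma|i,j,b,c\rangle=|i,j,b\oplus(M_\sigma)_{i,j},c\rangle$. For $0\le t\le T$, $|\psi_\sigma^t\rangle=U_tO_\sigma U_{t-1}O_\sigma\cdots U_1O_\sigma U_0|\vec0\rangle$. For $0\le k\le n-2$, $1\le d\le n-k-1$, $\sigma^{(k,d)}=(k+d,k+d-1,\dots,k)\circ\sigma$ (the cycle sends $k+d\mapsto k+d-1\mapsto\cdots\mapsto k\mapsto k+d$); $w(\sigma,\tau)=1/d$ if $\tau=\sigma^{(k,d)}$ for some such $k,d$, and $0$ otherwise. Finally $s_t=\sum_{\sigma,\tau}w(\sigma,\tau)\,|\langle\psi^t_\sigma|\psi^t_\tau\rangle|$. *)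

(* Defs.v *)
(* Complex scalars: any numClosedFieldType C (e.g. algC, or R[i]). *)
From HB Require Import structures.
From mathcomp Require Import all_boot all_order all_algebra all_fingroup.
Set Implicit Arguments. Unset Strict Implicit. Unset Printing Implicit Defensive.
Import Order.TTheory GRing.Theory Num.Theory.
Local Open Scope ring_scope.

(* Basis labels |i,j,b,c> with i,j < n, b a bit, c in {0,1}^w. *)
Definition Idx (n w : nat) : finType :=
  ('I_n * 'I_n * bool * {ffun 'I_w -> bool})%type.

(* Vectors of H and linear operators on H (matrices in the basis |i,j,b,c>). *)
Definition vect (C : numClosedFieldType) n w := Idx n w -> C.
Definition oper (C : numClosedFieldType) n w := Idx n w -> Idx n w -> C.

Section Q.
Variables (C : numClosedFieldType) (n w : nat).

Definition apply (A : oper C n w) (v : vect C n w) : vect C n w :=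
  fun x => \sum_y A x y * v y.

Definition dotp (u v : vect C n w) : C := \sum_x (u x)^* * v x.

(* U^* U = I (equivalent to unitarity in finite dimension) *)
Definition unitary (A : oper C n w) : Prop :=
  forall x y, \sum_z (A z x)^* * A z y = (x == y)%:R.

Definition psd (A : oper C n w) : Prop := forall v, 0 <= dotp v (apply A v).

Definition povm (E : {perm 'I_n} -> oper C n w) : Prop :=
  (forall s, psd (E s)) /\ (forall x y, \sum_s E s x y = (x == y)%:R).

Definition cmpM (s : {perm 'I_n}) (i j : 'I_n) : bool := (s i <= s j)%N.

(* O_sigma |i,j,b,c> = |i,j,b xor M_{ij},c>  (an involution on basis labels) *)
Definition oracle (s : {perm 'I_n}) (v : vect C n w) : vect C n w :=
  fun x => let '(i, j, b, c) := x in v (i, j, addb b (cmpM s i j), c).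

Definition ket0 : vect C n w :=
  fun x => let '(i, j, b, c) := x in
    ([&& nat_of_ord i == 0%N, nat_of_ord j == 0%N, ~~ b & [forall k, ~~ c k]])%:R.

Fixpoint psi (U : nat -> oper C n w) (s : {perm 'I_n}) (t : nat) : vect C n w :=
  match t with
  | 0 => apply (U 0%N) ket0
  | t'.+1 => apply (U t) (oracle s (psi U s t'))
  end.
End Q.

(* the cycle (k+d, k+d-1, ..., k): k+d -> k+d-1 -> ... -> k -> k+d *)
Definition cyc (k d m : nat) : nat :=
  if (k < m <= k + d)%N then m.-1 else if m == k then (k + d)%N else m.

(* tau = sigma^{(k,d)} = cyc_{k,d} o sigma, with 0 <= k <= n-2, 1 <= d <= n-k-1 *)
Definition is_move n (s t : {perm 'I_n}) (k d : nat) : bool :=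
  [&& (1 <= d)%N, (k + d <= n.-1)%N & [forall i, nat_of_ord (t i) == cyc k d (s i)]].

(* w(sigma,tau) = 1/d if tau = sigma^{(k,d)} (such (k,d) is unique), 0 otherwise *)
Definition weight (C : numClosedFieldType) n (s t : {perm 'I_n}) : C :=
  if [pick kd : 'I_n * 'I_n | is_move s t kd.1 kd.2] is Some kd
  then (nat_of_ord kd.2)%:R^-1 else 0.

Definition s_t (C : numClosedFieldType) n w (U : nat -> oper C n w) (t : nat) : C :=
  \sum_(s : {perm 'I_n}) \sum_(u : {perm 'I_n})
     weight C s u * `|dotp (psi U s t) (psi U u t)|.

(* Main.v *)
Require Import Defs.
From mathcomp Require Import all_boot all_order all_algebra all_fingroup.
From mathcomp Require Import ring zify.
Import Order.TTheory GRing.Theory Num.Theory.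
Local Open Scope ring_scope.
Set Implicit Arguments. Unset Strict Implicit.

Section H.
Variables (C : numClosedFieldType) (n w : nat).
Notation V := (vect C n w).
Notation O := (oper C n w).

Definition lin (a : C) (u : V) (b : C) (v : V) : V := fun x => a * u x + b * v x.

Lemma dotp_ext (u v v' : V) : (forall x, v x = v' x) -> dotp u v = dotp u v'.
Proof. by move=> h; apply: eq_bigr => x _; rewrite h. Qed.

Lemma dotp_extl (u u' v : V) : (forall x, u x = u' x) -> dotp u v = dotp u' v.
Proof. by move=> h; apply: eq_bigr => x _; rewrite h. Qed.

Lemma dotp_linr (u : V) a v1 b v2 : dotp u (lin a v1 b v2) = a * dotp u v1 + b * dotp u v2.
Proof.
rewrite /dotp /lin !mulr_sumr -big_split /=; apply: eq_bigr => x _; ring.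
Qed.

Lemma dotp_linl (v : V) a u1 b u2 : dotp (lin a u1 b u2) v = a^* * dotp u1 v + b^* * dotp u2 v.
Proof.
rewrite /dotp /lin !mulr_sumr -big_split /=; apply: eq_bigr => x _.
rewrite rmorphD !rmorphM /=; ring.
Qed.

Lemma apply_lin (A : O) a v1 b v2 x :
  apply A (lin a v1 b v2) x = lin a (apply A v1) b (apply A v2) x.
Proof.
rewrite /apply /lin !mulr_sumr -big_split /=; apply: eq_bigr => y _; ring.
Qed.

Definition F (A : O) u v := dotp u (apply A v).

Lemma F_lin (A : O) u v a b :
  F A (lin a u b v) (lin a u b v) =
  a^* * a * F A u u + a^* * b * F A u v + b^* * a * F A v u + b^* * b * F A v v.
Proof.
rewrite /F (dotp_ext _ (apply_lin A a u b v)) dotp_linl !dotp_linr; ring.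
Qed.

Lemma psd_herm (A : O) : psd A -> forall u v, F A u v = (F A v u)^*.
Proof.
move=> hA u v.
have r0 : forall z, F A z z \is Num.real by move=> z; apply: ger0_real; apply: hA.
have h1 := r0 (lin 1 u 1 v); have h2 := r0 (lin 1 u 'i v).
rewrite F_lin in h1; rewrite F_lin in h2.
move: h1 h2 (r0 u) (r0 v); rewrite !CrealE => /eqP h1 /eqP h2 /eqP hu /eqP hv.
set X := F A u v in h1 h2 *; set Y := F A v u in h1 h2 *.
rewrite !rmorphD !rmorphM /= !conjCK !rmorph1 conjCi hu hv !mul1r !mulr1 in h1 h2.
move: (F A u u) (F A v v) h1 h2 => P Q h1 h2.
have d1 : X^* + Y^* - X - Y = 0.
  rewrite (_ : _ - _ = (P + X^* + Y^* + Q) - (P + X + Y + Q)); last by ring.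
  by rewrite h1 subrr.
have d2 : 'i * (Y^* - X^* - X + Y) = 0.
  rewrite (_ : _ * _ = (P + - 'i * X^* + 'i * Y^* + 'i * - 'i * Q) - (P + 'i * X + - 'i * Y + - 'i * 'i * Q)); last by ring.
  by rewrite h2 subrr.
move/eqP: d2; rewrite mulf_eq0 (negPf (neq0Ci _)) /= => /eqP d2.
have : (Y^* - X) *+ 2 = 0 *+ 2.
  have -> : (Y^* - X) *+ 2 = (X^* + Y^* - X - Y) + (Y^* - X^* - X + Y).
    by rewrite mulr2n; ring.
  by rewrite d1 d2 addr0 mul0rn.
by move/(pmulrnI (isT : (0 < 2)%N))/eqP; rewrite subr_eq0 => /eqP.
Qed.

Lemma cs_sq (A : O) u v : psd A -> `|F A u v| ^+ 2 <= F A u u * F A v v.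
Proof.
move=> hA; have hvu := psd_herm hA v u.
have ha : 0 <= F A u u := hA u. have hb : 0 <= F A v v := hA v.
have F0 : forall c d, 0 <= F A (lin c u d v) (lin c u d v) by move=> c d; apply: hA.
have e : forall c d, F A (lin c u d v) (lin c u d v) =
  c^* * c * F A u u + c^* * d * F A u v + d^* * c * (F A u v)^* + d^* * d * F A v v.
  by move=> c d; rewrite F_lin hvu.
move: e ha hb F0; set X := F A u v; move: (F A u u) (F A v v) => a b e ha hb F0.
rewrite normCK.
have hz : 0 <= X * X^* by rewrite -normCK exprn_ge0.
have cN' : forall z : C, (- z)^* = - z^* by move=> z; rewrite rmorphN.
have cN : forall z : C, (- z^*)^* = - z by move=> z; rewrite cN' conjCK.
move: (hb); rewrite le_eqVlt => /orP [/eqP hb0|hb'].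
- move: (ha); rewrite le_eqVlt => /orP [/eqP ha0|ha'].
  + have := F0 1 (- X^*); rewrite e -ha0 -hb0 cN rmorph1.
    rewrite (_ : _ + _ = - (X * X^* + X * X^*)); last by ring.
    rewrite oppr_ge0 mul0r => h; apply: (le_trans _ h). by rewrite lerDl.
  + have := F0 (- X) a; rewrite e cN' (geC0_conj ha).
    rewrite (_ : _ + _ = a * (a * b - X * X^*)); last by ring.
    by rewrite pmulr_rge0 // subr_ge0.
- have := F0 b (- X^*); rewrite e cN (geC0_conj hb).
  rewrite (_ : _ + _ = b * (b * a - X * X^*)); last by ring.
  by rewrite pmulr_rge0 // subr_ge0 [a * b]mulrC.
Qed.

Lemma cs (A : O) u v : psd A -> `|F A u v| <= sqrtC (F A u u) * sqrtC (F A v v).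
Proof.
move=> hA; have ha : 0 <= F A u u := hA u. have hb : 0 <= F A v v := hA v.
rewrite -sqrtCM ?nnegrE // -(sqrCK (normr_ge0 (F A u v))).
by rewrite ler_sqrtC ?nnegrE ?exprn_ge0 ?mulr_ge0 // cs_sq.
Qed.

Lemma num_bound (e a a' b b' : C) :
  0 <= e -> e < 1 / 2 -> a + a' = 1 -> b + b' = 1 ->
  0 <= a -> 0 <= a' -> 0 <= b -> 0 <= b' -> 1 - e <= a -> 1 - e <= b' ->
  sqrtC a * sqrtC b + sqrtC a' * sqrtC b' <= 2 * sqrtC (e * (1 - e)).
Proof.
move=> he he2 haa hbb ha ha' hb hb' hea heb.
have h2e : 0 <= 1 - e - e.
  rewrite subr_ge0 lerBrDr -mulr2n -mulr_natr.
  by have := ltW he2; rewrite ler_pdivlMr ?ltr0n.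
have h1e : 0 <= 1 - e by apply: (le_trans h2e); rewrite gerBl.
have ea' : a' <= e by rewrite -(addKr a a') haa addrC lerBlDr addrC -lerBlDr.
have eb : b <= e by rewrite -(addrK b' b) hbb lerBlDr addrC -lerBlDr.
set p := sqrtC a; set p' := sqrtC a'; set q := sqrtC b; set q' := sqrtC b'.
set r := sqrtC (1 - e); set r' := sqrtC e.
have hp : r <= p by rewrite ler_sqrtC ?nnegrE.
have hq' : r <= q' by rewrite ler_sqrtC ?nnegrE.
have hp' : p' <= r' by rewrite ler_sqrtC ?nnegrE.
have hq : q <= r' by rewrite ler_sqrtC ?nnegrE.
have g0 : forall z : C, 0 <= sqrtC z = (0 <= z) by move=> z; rewrite sqrtC_ge0.
have hr : 0 <= r by rewrite sqrtC_ge0.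
have hr' : 0 <= r' by rewrite sqrtC_ge0.
have hp0 : 0 <= p by rewrite sqrtC_ge0.
have hp'0 : 0 <= p' by rewrite sqrtC_ge0.
have hq0 : 0 <= q by rewrite sqrtC_ge0.
have hq'0 : 0 <= q' by rewrite sqrtC_ge0.
have hy : 1 - e - e <= p * q' - p' * q.
  have -> : 1 - e - e = r * r - r' * r' by rewrite -!expr2 !sqrtCK.
  by apply: lerB; apply: ler_pM.
have hy0 : 0 <= p * q' - p' * q := le_trans h2e hy.
have hid : (p * q + p' * q') ^+ 2 + (p * q' - p' * q) ^+ 2 = 1.
  rewrite (_ : _ + _ = (p ^+ 2 + p' ^+ 2) * (q ^+ 2 + q' ^+ 2)); last by ring.
  by rewrite !sqrtCK haa hbb mulr1.
have hx0 : 0 <= p * q + p' * q' by rewrite addr_ge0 ?mulr_ge0.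
have hs0 : 0 <= 2 * sqrtC (e * (1 - e)) by rewrite mulr_ge0 ?ler0n // sqrtC_ge0 mulr_ge0.
rewrite -(ler_pXn2r (isT : (0 < 2)%N)) ?nnegrE //.
have -> : (p * q + p' * q') ^+ 2 = 1 - (p * q' - p' * q) ^+ 2.
  by rewrite -hid addrK.
rewrite exprMn sqrtCK.
have hsq : (1 - e - e) ^+ 2 <= (p * q' - p' * q) ^+ 2.
  by rewrite ler_pXn2r ?nnegrE.
apply: le_trans (lerB (lexx 1) hsq) _.
rewrite le_eqVlt; apply/orP; left; apply/eqP.
rewrite (_ : (2 : C) ^+ 2 = 4); last by rewrite expr2 -natrM.
ring.
Qed.

Lemma unitary_dotp (A : O) u v : unitary A -> dotp (apply A u) (apply A v) = dotp u v.
Proof.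
move=> hA; rewrite /dotp /apply.
transitivity (\sum_x \sum_y \sum_z ((A x y)^* * (u y)^* * (A x z * v z))).
  apply: eq_bigr => x _; rewrite rmorph_sum mulr_suml; apply: eq_bigr => y _.
  by rewrite mulr_sumr; apply: eq_bigr => z _; rewrite rmorphM.
rewrite exchange_big; apply: eq_bigr => y _; rewrite exchange_big /=.
have k : forall z, \sum_x ((A x y)^* * (u y)^* * (A x z * v z)) = (u y)^* * v z * (y == z)%:R.
  move=> z; rewrite -hA mulr_sumr; apply: eq_bigr => x _; ring.
rewrite (bigD1 y) //= k eqxx mulr1 big1 ?addr0 //.
by move=> z /negbTE hz; rewrite k eq_sym hz mulr0.
Qed.

Definition ofl (s : {perm 'I_n}) (x : Idx n w) : Idx n w :=
  let '(i, j, b, c) := x in (i, j, addb b (cmpM s i j), c).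

Lemma oracleE s (v : V) x : oracle s v x = v (ofl s x).
Proof. by case: x => [[[i j] b] c]. Qed.

Lemma oflK s : involutive (ofl s).
Proof. by case=> [[[i j] b] c] /=; rewrite addbK. Qed.

Lemma oracle_dotp s (u v : V) : dotp (oracle s u) (oracle s v) = dotp u v.
Proof.
rewrite /dotp [RHS](reindex_inj (inv_inj (oflK s))).
by apply: eq_bigr => x _; rewrite !oracleE.
Qed.

Lemma ket0_dotp : (0 < n)%N -> dotp (@ket0 C n w) (@ket0 C n w) = 1.
Proof.
move=> n0; pose i0 : 'I_n := Ordinal n0.
pose x0 : Idx n w := (i0, i0, false, [ffun => false]).
rewrite /dotp (bigD1 x0) //= big1 ?addr0.
  rewrite /i0 /=.
  rewrite (_ : [forall k, _] = true); last by apply/forallP => k; rewrite ffunE.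
  by rewrite conjC_nat mulr1.
case=> [[[i j] b] c] hx /=.
case h : [&& nat_of_ord i == 0%N, nat_of_ord j == 0%N, ~~ b & [forall k, ~~ c k]]; last by rewrite mulr0.
exfalso; move/eqP: hx; apply.
move/and4P: h => [/eqP hi /eqP hj hb /forallP hc].
have -> : i = i0 by apply: val_inj.
have -> : j = i0 by apply: val_inj.
move/negbTE: hb => ->.
by congr (_, _); apply/ffunP => k; rewrite ffunE; apply/negbTE.
Qed.

Lemma psi_norm (U : nat -> O) s T : (0 < n)%N -> (forall t, (t <= T)%N -> unitary (U t)) ->
  forall t, (t <= T)%N -> dotp (psi U s t) (psi U s t) = 1.
Proof.
move=> n0 hU; elim=> [|t IH] ht /=.
  by rewrite unitary_dotp ?ket0_dotp //; apply: hU.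
rewrite unitary_dotp; last exact: hU.
rewrite oracle_dotp IH //; exact: ltnW.
Qed.

End H.
Section H2.
Variables (C : numClosedFieldType) (n w : nat).
Notation V := (vect C n w).
Notation O := (oper C n w).
Lemma F_ext (A B : O) (u v : V) : (forall x y, A x y = B x y) -> F A u v = F B u v.
Proof.
move=> h; apply: dotp_ext => x; apply: eq_bigr => y _; by rewrite h.
Qed.

Lemma F_sum (I : finType) (P : pred I) (E : I -> O) (u v : V) :
  F (fun x y => \sum_(i | P i) E i x y) u v = \sum_(i | P i) F (E i) u v.
Proof.
rewrite /F /dotp /apply.
transitivity (\sum_x \sum_(i | P i) (u x)^* * \sum_y E i x y * v y).
  apply: eq_bigr => x _; rewrite -mulr_sumr; congr (_ * _).
  rewrite exchange_big /=; apply: eq_bigr => y _; by rewrite mulr_suml.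
by rewrite exchange_big.
Qed.

Lemma F_id (u v : V) : F (fun x y => (x == y)%:R) u v = dotp u v.
Proof.
apply: dotp_ext => x; rewrite /apply (bigD1 x) //= eqxx mul1r big1 ?addr0 //.
by move=> y /negbTE; rewrite eq_sym => ->; rewrite mul0r.
Qed.

Lemma F_add (A B : O) (u v : V) :
  F (fun x y => A x y + B x y) u v = F A u v + F B u v.
Proof.
rewrite /F /dotp /apply -big_split; apply: eq_bigr => x _ /=.
rewrite -mulrDr -big_split; congr (_ * _); apply: eq_bigr => y _ /=; exact: mulrDl.
Qed.

Lemma pair_bound (E : {perm 'I_n} -> O) (p f : V) s u e :
  povm E -> s != u -> dotp p p = 1 -> dotp f f = 1 -> 0 <= e -> e < 1 / 2 ->
  1 - e <= F (E s) p p -> 1 - e <= F (E u) f f -> `|dotp p f| <= 2 * sqrtC (e * (1 - e)).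
Proof.
move=> [hpsd hsum] su hp hf he he2 hps hfu.
pose Q : O := fun x y => \sum_(t | t != s) E t x y.
have hsplit : forall a b : V, dotp a b = F (E s) a b + F Q a b.
  move=> a b; rewrite -F_id -F_add; apply: F_ext => x y.
  by rewrite -(hsum x y) (bigD1 s).
have hQ : psd Q.
  move=> v; rewrite -/(F Q v v) /Q F_sum; apply: sumr_ge0 => t _; exact: hpsd.
have hQu : F (E u) f f <= F Q f f.
  rewrite /Q F_sum (bigD1 u) 1?eq_sym //= lerDl; apply: sumr_ge0 => t _; exact: hpsd.
apply: le_trans (_ : sqrtC (F (E s) p p) * sqrtC (F (E s) f f) +
                     sqrtC (F Q p p) * sqrtC (F Q f f) <= _).
  rewrite hsplit; apply: le_trans (ler_normD _ _) _.
  by apply: lerD; apply: cs.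
apply: num_bound => //.
- by rewrite -hsplit.
- by rewrite -hsplit.
- exact: hpsd.
- exact: hQ.
- exact: hpsd.
- exact: hQ.
- exact: le_trans hfu hQu.
Qed.
End H2.

Lemma weight_ge0 (C : numClosedFieldType) n (s t : {perm 'I_n}) : 0 <= weight C s t.
Proof. rewrite /weight; case: pickP => [kd _|_] //; by rewrite invr_ge0 ler0n. Qed.

Lemma weight_neq (C : numClosedFieldType) n (s t : {perm 'I_n}) : weight C s t != 0 -> s != t.
Proof.
rewrite /weight; case: pickP => [[k d] /= hm _|_]; last by rewrite eqxx.
apply/eqP => est; subst t.
move/and3P: hm => [hd _ /forallP /(_ ((s^-1)%g k))].
rewrite permKV /cyc ltnn /= eqxx => /eqP h.
by move: hd h; clear; lia.
Qed.

Theorem lemma2 (C : numClosedFieldType) (n w T : nat) (eps : C)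
  (U : nat -> oper C n w) (E : {perm 'I_n} -> oper C n w) :
  (2 <= n)%N -> 0 <= eps -> eps < 1 / 2 ->
  (forall t, (t <= T)%N -> unitary (U t)) ->
  povm E ->
  (forall s : {perm 'I_n}, 1 - eps <= dotp (psi U s T) (apply (E s) (psi U s T))) ->
  s_t U T <= 2 * sqrtC (eps * (1 - eps)) * s_t U 0.
Proof.
move=> n2 he he2 hU hE hs.
have n0 : (0 < n)%N by apply: leq_trans n2.
rewrite /s_t mulr_sumr; apply: ler_sum => s _; rewrite mulr_sumr; apply: ler_sum => u _.
have -> : dotp (psi U s 0) (psi U u 0) = 1 by exact: (psi_norm s n0 hU (leq0n T)).
rewrite normr1 mulr1 [X in _ <= X]mulrC.
have [w0|wn0] := eqVneq (weight C s u) 0; first by rewrite w0 !mul0r.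
apply: ler_wpM2l; first exact: weight_ge0.
apply: (pair_bound hE (weight_neq wn0)) => //.
- exact: (psi_norm s n0 hU (leqnn T)).
- exact: (psi_norm u n0 hU (leqnn T)).
- exact: hs.
- exact: hs.
Qed.
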